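(* Consider a Boolean control network in algebraic form $$\mathbf{x}(t+1)=L\ltimes \mathbf{u}(t)\ltimes \mathbf{x}(t),\qquad \mathbf{y}(t)=H\mathbf{x}(t),\qquad t\in\mathbb{Z}_+,$$ with $\mathbf{x}(t)\in\mathcal{L}_N$, $\mathbf{u}(t)\in\mathcal{L}_M$, $\mathbf{y}(t)\in\mathcal{L}_P$, $L\in\mathcal{L}_{N\times NM}$, $H\in\mathcal{L}_{P\times N}$, and let $\{\mathbf{y}_r(t)\}_{t=1}^T$, $\mathbf{y}_r(t)\in\mathcal{L}_P$, be a finite-length reference output trajectory. Let $\mathcal{X}_1$ be the set of initial states $\mathbf{x}_1$ of all state trajectories $\{\mathbf{x}_t\}_{t=1}^T$ generated by the network (i.e. $\mathbf{x}_{t+1}=L\ltimes\mathbf{u}_t\ltimes\mathbf{x}_t$ for some $\mathbf{u}_t\in\mathcal{L}_M$, $t\in[1,T-1]$) that are compatible with the reference, i.e. $H\mathbf{x}_t=\mathbf{y}_r(t)$ for all $t\in[1,T]$. Then the following are equivalent: (i) the trajectory $\{\mathbf{y}_r(t)\}_{t=1}^T$ is trackable from every initial state $\mathbf{x}_0\in\mathcal{L}_N$; (ii) $\mathcal{X}_1\neq\emptyset$ and for every $\mathbf{x}_0\in\mathcal{L}_N$ there exists $\mathbf{u}\in\mathcal{L}_M$ such that $L\ltimes\mathbf{u}\ltimes\mathbf{x}_0\in\mathcal{X}_1$.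
   Context: $\delta_k^i$ denotes the $i$-th canonical vector of $\mathbb{R}^k$; $\mathcal{L}_k$ is the set of canonical vectors of $\mathbb{R}^k$, and $\mathcal{L}_{k\times q}$ the set of $k\times q$ matrices whose columns are in $\mathcal{L}_k$. $N=2^n$, $M=2^m$, $P=2^p$. Writing $L=[L_1\,|\,L_2\,|\,\cdots\,|\,L_M]$ with $L_i\in\mathcal{L}_{N\times N}$, the semi-tensor product satisfies $L\ltimes\delta_M^i\ltimes\mathbf{x}=L_i\mathbf{x}$ for $\mathbf{x}\in\mathcal{L}_N$. For $k\ge1$, $\mathbf{y}(k,\mathbf{x}(0),\{\mathbf{u}(t)\}_{t=0}^{k-1})$ denotes the output at time $k$ obtained from initial state $\mathbf{x}(0)$ applying inputs $\mathbf{u}(0),\dots,\mathbf{u}(k-1)$. The trajectory $\{\mathbf{y}_r(t)\}_{t=1}^T$ is trackable from $\mathbf{x}_0$ if there exist $\mathbf{u}(0),\dots,\mathbf{u}(T-1)\in\mathcal{L}_M$ such that $\mathbf{y}(t,\mathbf{x}_0,\{\mathbf{u}(\tau)\}_{\tau=0}^{t-1})=\mathbf{y}_r(t)$ for all $t\in[1,T]$. *)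

(* Defs.v *)
From HB Require Import structures.
From mathcomp Require Import all_boot all_order all_algebra.
Set Implicit Arguments. Unset Strict Implicit. Unset Printing Implicit Defensive.
Import Order.TTheory GRing.Theory Num.Theory.
Local Open Scope ring_scope.

Definition is_canon (R : numFieldType) (k : nat) (v : 'cV[R]_k) : Prop :=
  exists i : 'I_k, v = delta_mx i 0.

Definition is_logical (R : numFieldType) (k q : nat) (A : 'M[R]_(k, q)) : Prop :=
  forall j : 'I_q, is_canon (col j A).

(* The i-th N x N block L_i of L = [L_1 | ... | L_M] (0-indexed i). *)
Definition Lblock (R : numFieldType) (N M : nat) (L : 'M[R]_(N, N * M)) (i : 'I_M)
  : 'M[R]_N :=
  \matrix_(r < N, c < N) L r (cast_ord (mulnC M N) (mxvec_index i c)).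

(* Semi-tensor product L |x u |x x = L (u (x) x) = sum_i u_i L_i x. *)
Definition stp (R : numFieldType) (N M : nat) (L : 'M[R]_(N, N * M))
  (u : 'cV[R]_M) (x : 'cV[R]_N) : 'cV[R]_N :=
  \sum_(i < M) u i 0 *: (Lblock L i *m x).

Fixpoint traj (R : numFieldType) (N M : nat) (L : 'M[R]_(N, N * M))
  (x0 : 'cV[R]_N) (us : nat -> 'cV[R]_M) (t : nat) : 'cV[R]_N :=
  match t with
  | 0 => x0
  | t'.+1 => stp L (us t') (traj L x0 us t')
  end.

Definition output (R : numFieldType) (N M P : nat) (L : 'M[R]_(N, N * M))
  (H : 'M[R]_(P, N)) (x0 : 'cV[R]_N) (us : nat -> 'cV[R]_M) (t : nat) : 'cV[R]_P :=
  H *m traj L x0 us t.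

Definition trackable (R : numFieldType) (N M P : nat) (L : 'M[R]_(N, N * M))
  (H : 'M[R]_(P, N)) (T : nat) (yr : nat -> 'cV[R]_P) (x0 : 'cV[R]_N) : Prop :=
  exists us : nat -> 'cV[R]_M,
    (forall t, (t < T)%N -> is_canon (us t)) /\
    (forall t, (1 <= t <= T)%N -> output L H x0 us t = yr t).

Definition X1 (R : numFieldType) (N M P : nat) (L : 'M[R]_(N, N * M))
  (H : 'M[R]_(P, N)) (T : nat) (yr : nat -> 'cV[R]_P) (x1 : 'cV[R]_N) : Prop :=
  exists xs : nat -> 'cV[R]_N,
    xs 1%N = x1 /\
    (forall t, (1 <= t <= T)%N -> is_canon (xs t)) /\
    (forall t, (1 <= t < T)%N ->
        exists u : 'cV[R]_M, is_canon u /\ xs t.+1 = stp L u (xs t)) /\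
    (forall t, (1 <= t <= T)%N -> H *m xs t = yr t).

(* Main.v *)
Require Import Defs.
From mathcomp Require Import all_boot all_order all_algebra.
Set Implicit Arguments. Unset Strict Implicit. Unset Printing Implicit Defensive.
Import Order.TTheory GRing.Theory Num.Theory.
Local Open Scope ring_scope.

Lemma stp_delta (R : numFieldType) (N M : nat) (L : 'M[R]_(N, N * M)) (i : 'I_M)
  (x : 'cV[R]_N) : stp L (delta_mx i 0) x = Lblock L i *m x.
Proof.
rewrite /stp (bigD1 i) //= big1 ?addr0.
  by rewrite mxE !eqxx scale1r.
move=> k /negbTE kn; rewrite mxE kn /=.
by rewrite scale0r.
Qed.

Lemma stp_canon (R : numFieldType) (N M : nat) (L : 'M[R]_(N, N * M))
  (u : 'cV[R]_M) (x : 'cV[R]_N) :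
  is_logical L -> is_canon u -> is_canon x -> is_canon (stp L u x).
Proof.
move=> hL [i ->] [j ->]; rewrite stp_delta -colE.
have [k hk] := hL (cast_ord (mulnC M N) (mxvec_index i j)).
exists k; rewrite -hk; apply/matrixP => r c; by rewrite !mxE.
Qed.

Theorem theorem1 (R : numFieldType) (n m p : nat)
  (L : 'M[R]_(2 ^ n, 2 ^ n * 2 ^ m)) (H : 'M[R]_(2 ^ p, 2 ^ n))
  (T : nat) (yr : nat -> 'cV[R]_(2 ^ p)) :
  is_logical L -> is_logical H ->
  (forall t, (1 <= t <= T)%N -> is_canon (yr t)) ->
  ((forall x0 : 'cV[R]_(2 ^ n), is_canon x0 -> trackable L H T yr x0) <->
   ((exists x1, X1 L H T yr x1) /\
    (forall x0 : 'cV[R]_(2 ^ n), is_canon x0 ->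
       exists u : 'cV[R]_(2 ^ m), is_canon u /\ X1 L H T yr (stp L u x0)))).
Proof.
move=> hL hH hyr.
have n0 : (0 < 2 ^ n)%N by rewrite expn_gt0.
have m0 : (0 < 2 ^ m)%N by rewrite expn_gt0.
pose x00 : 'cV[R]_(2 ^ n) := delta_mx (Ordinal n0) 0.
pose u00 : 'cV[R]_(2 ^ m) := delta_mx (Ordinal m0) 0.
have cx00 : is_canon x00 by exists (Ordinal n0).
have cu00 : is_canon u00 by exists (Ordinal m0).
have key : forall x0, is_canon x0 -> trackable L H T yr x0 ->
    exists u, is_canon u /\ X1 L H T yr (stp L u x0).
  move=> x0 cx0 [us [cus hout]].
  case: T hyr cus hout => [|T] hyr cus hout.
    exists u00; split => //; exists (fun _ => stp L u00 x0); split => //.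
    by split; [|split] => -[|t].
  exists (us 0%N); split; first exact: cus.
  exists (traj L x0 us); split => //; split; [|split].
  - move=> t /andP [h1 h2]; elim: t h1 h2 => [//|t IH] _ h2 /=.
    apply: stp_canon => //; first by apply: cus.
    by case: t IH h2 => [|t] IH h2 //; apply: IH => //; apply: ltnW.
  - move=> t /andP [h1 h2]; exists (us t); split => //; exact: cus.
  - exact: hout.
split.
  move=> hi; split; last by move=> x0 cx0; apply: key => //; apply: hi.
  by have [u [_ hx]] := key _ cx00 (hi _ cx00); exists (stp L u x00).
move=> [_ hii] x0 cx0.
have [u [cu [xs [hx1 [cxs [htr hout]]]]]] := hii _ cx0.
pose pk t := [pick i : 'I_(2 ^ m) | xs t.+1 == stp L (delta_mx i 0) (xs t)].
pose us t := if t is 0%N then u else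
  if pk t is Some i then delta_mx i 0 else u00.
exists us; split.
  case=> [|t] _ //=; rewrite /us /pk; case: pickP => // i _; by exists i.
have htraj : forall t, (1 <= t <= T)%N -> traj L x0 us t = xs t.
  elim=> [//|t IH] /andP [_ h2].
  case: t IH h2 => [|t] IH h2; first by rewrite /= hx1.
  change (stp L (us t.+1) (traj L x0 us t.+1) = xs t.+2).
  rewrite IH; last by rewrite (ltnW h2).
  rewrite /us /pk; case: pickP => [i /eqP -> //|].
  have [v [[i ->] e]] := htr t.+1 (h2 : (1 <= t.+1 < T)%N).
  by move/(_ i); rewrite e eqxx.
move=> t ht; rewrite /output htraj //; exact: hout.
Qed.
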